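(* Let $G$ be a finite group and $T$ a $G$-Tambara functor. Then there is an isomorphism of frames $\mathrm{RadId}_G(T)\cong \Omega(\operatorname{Spec}_{\mathbf{Nak}}(T))$, where $\Omega(X)$ denotes the frame of open subsets of a space $X$.
   Context: All rings are commutative with unit. A $G$-Tambara functor $T$ consists of commutative rings $T(G/H)$ for subgroups $H\le G$ with restriction ring maps, additive transfer maps, multiplicative norm maps and conjugation isomorphisms satisfying the standard Tambara axioms (Hill–Mazur). A Tambara ideal is a family of ring ideals $I(G/H)\subseteq T(G/H)$ closed under restriction, transfer, norm and conjugation; it is proper if $1\notin I(G/G)$. $\langle x\rangle$ denotes the Tambara ideal generated by an element $x$; the product $IJ$ is the Tambara ideal generated by the levelwise products $I(G/H)J(G/H)$. The radical $\sqrt I$ has $\sqrt I(G/H)=\{x\mid \langle x\rangle^n\subseteq I\text{ for some }n\ge1\}$; $I$ is radical if $I=\sqrt I$. $\mathrm{RadId}_G(T)$ is the set of radical Tambara ideals ordered by inclusion (a frame with meets intersections and joins $\sqrt{\sum_\lambda I_\lambda}$). A proper Tambara ideal $P$ is prime if $IJ\subseteq P$ implies $I\subseteq P$ or $J\subseteq P$ for all Tambara ideals $I,J$. $\operatorname{Spec}_{\mathbf{Nak}}(T)$ is the set of prime Tambara ideals with the topology having the sets $V_H(x)=\{P\mid x\in P(G/H)\}$ ($H\le G$, $x\in T(G/H)$) as a subbasis of closed sets. *)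

(* Defs.v *)
From HB Require Import structures.
From mathcomp Require Import all_boot all_order all_algebra all_fingroup.
Unset Printing Implicit Defensive.
Import GRing.Theory.
Local Open Scope ring_scope.

(* The finite group G is the whole finGroupType gT; its subgroups are the
   {group gT}.  The
   structure maps are total functions which are only constrained (by the
   axioms below) in the meaningful situations:
     tres H K : T(G/H) -> T(G/K)      (restriction,  K <= H)
     ttr  H K : T(G/K) -> T(G/H)      (transfer,     K <= H)
     tnm  H K : T(G/K) -> T(G/H)      (norm,         K <= H)
     tcj g H K : T(G/H) -> T(G/K)     (conjugation,  K = H :^ g = g^-1 H g). *)
Record tambara_data (gT : finGroupType) := TambaraData {
  tT : {group gT} -> comPzRingType;
  tres : forall H K : {group gT}, tT H -> tT K;
  ttr : forall H K : {group gT}, tT K -> tT H;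
  tnm : forall H K : {group gT}, tT K -> tT H;
  tcj : forall (g : gT) (H K : {group gT}), tT H -> tT K
}.
Arguments tT {gT} t H.
Arguments tres {gT} t H K _.
Arguments ttr {gT} t H K _.
Arguments tnm {gT} t H K _.
Arguments tcj {gT} t g H K _.

Definition is_dcrep {gT : finGroupType} (L K : {set gT}) (x : gT) : bool :=
  [pick y in (L :* x * K)%g] == Some x.

(* Sections of  Z = coprod_i H/J_i  -->  H/K  (J_i <= K <= H): a function on
   left cosets C = xK in H/K choosing an index i and a left coset D = yJ_i
   contained in C; it is None outside H/K. *)
Definition tsection (gT : finGroupType) (n : nat) :=
  {ffun {set gT} -> option ('I_n * {set gT})}.

Definition is_tsection {gT : finGroupType} (H K : {set gT}) {n : nat}
    (J : 'I_n -> {group gT}) (s : tsection gT n) : bool :=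
  [forall C : {set gT},
     if C \in lcosets K H then
       (if s C is Some (i, D) then (D \in lcosets (J i) H) && (D \subset C)
        else false)
     else s C == None].

Definition sect_act {gT : finGroupType} {n : nat} (h : gT) (s : tsection gT n)
  : tsection gT n :=
  [ffun C => omap (fun p => (p.1, (h *: p.2)%g)) (s (h^-1 *: C)%g)].

Definition is_sect_rep {gT : finGroupType} (H K : {set gT}) {n : nat}
    (J : 'I_n -> {group gT}) (s : tsection gT n) : bool :=
  [pick t | is_tsection H K J t && [exists h in H, t == sect_act h s]] == Some s.

Definition sect_stab {gT : finGroupType} (H : {set gT}) {n : nat}
    (s : tsection gT n) : {group gT} :=
  (<< [set h in H | sect_act h s == s] >>)%G.

(* right-hand side of Tambara reciprocity:
   N_K^H (sum_i tr_{J_i}^K a_i)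
     = sum_{[s] in H\Sect} tr_{L_s}^H prod_{x in L_s\H/K}
          N_{L_s cap xKx^-1}^{L_s} res^{yJ_iy^-1}_{L_s cap xKx^-1} c_y (a_i)
   where s(xK) = (i, yJ_i). *)
Definition recip_term {gT : finGroupType} (T : tambara_data gT)
    (K L : {group gT}) {n : nat} (J : 'I_n -> {group gT})
    (a : forall i, tT T (J i)) (s : tsection gT n) (x : gT) : tT T L :=
  match s (x *: K)%g with
  | Some (i, D) =>
      let y := repr D in
      tnm T L (L :&: K :^ x^-1)%G
        (tres T (J i :^ y^-1)%G (L :&: K :^ x^-1)%G
           (tcj T y^-1 (J i) (J i :^ y^-1)%G (a i)))
  | None => 1
  end.

Definition recip_rhs {gT : finGroupType} (T : tambara_data gT)
    (H K : {group gT}) {n : nat} (J : 'I_n -> {group gT})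
    (a : forall i, tT T (J i)) : tT T H :=
  \sum_(s : tsection gT n | is_tsection H K J s && is_sect_rep H K J s)
     ttr T H (sect_stab H s)
       (\prod_(x in H | is_dcrep (sect_stab H s) K x)
           recip_term T K (sect_stab H s) J a s x).

Definition is_tambara {gT : finGroupType} (T : tambara_data gT) : Prop :=
  (forall (H K : {group gT}), K \subset H ->
     tres T H K 1 = 1 /\
     (forall x y, tres T H K (x + y) = tres T H K x + tres T H K y) /\
     (forall x y, tres T H K (x * y) = tres T H K x * tres T H K y)) /\
  (forall (H : {group gT}) x, tres T H H x = x) /\
  (forall (H K L : {group gT}) x, L \subset K -> K \subset H ->
     tres T K L (tres T H K x) = tres T H L x) /\
  (forall (H K : {group gT}) x y, K \subset H ->
     ttr T H K (x + y) = ttr T H K x + ttr T H K y) /\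
  (forall (H : {group gT}) x, ttr T H H x = x) /\
  (forall (H K L : {group gT}) x, L \subset K -> K \subset H ->
     ttr T H K (ttr T K L x) = ttr T H L x) /\
  (forall (H K : {group gT}), K \subset H ->
     tnm T H K 1 = 1 /\
     (forall x y, tnm T H K (x * y) = tnm T H K x * tnm T H K y)) /\
  (forall (H : {group gT}) x, tnm T H H x = x) /\
  (forall (H K L : {group gT}) x, L \subset K -> K \subset H ->
     tnm T H K (tnm T K L x) = tnm T H L x) /\
  (forall g (H K : {group gT}), (K :=: H :^ g)%g ->
     tcj T g H K 1 = 1 /\
     (forall x y, tcj T g H K (x + y) = tcj T g H K x + tcj T g H K y) /\
     (forall x y, tcj T g H K (x * y) = tcj T g H K x * tcj T g H K y)) /\
  (forall g h (H K L : {group gT}) x, (K :=: H :^ g)%g -> (L :=: K :^ h)%g ->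
     tcj T h K L (tcj T g H K x) = tcj T (g * h)%g H L x) /\
  (forall h (H : {group gT}) x, h \in H -> tcj T h H H x = x) /\
  (forall g (H K H' K' : {group gT}), K \subset H ->
     (H' :=: H :^ g)%g -> (K' :=: K :^ g)%g ->
     (forall x, tcj T g K K' (tres T H K x) = tres T H' K' (tcj T g H H' x)) /\
     (forall x, tcj T g H H' (ttr T H K x) = ttr T H' K' (tcj T g K K' x)) /\
     (forall x, tcj T g H H' (tnm T H K x) = tnm T H' K' (tcj T g K K' x))) /\
  (forall (H K : {group gT}) a b, K \subset H ->
     ttr T H K (a * tres T H K b) = ttr T H K a * b) /\
  (forall (H J K : {group gT}) a, J \subset H -> K \subset H ->
     tres T H J (ttr T H K a) =
     \sum_(x in H | is_dcrep J K x)
        ttr T J (J :&: K :^ x^-1)%G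
          (tcj T x^-1 (K :&: J :^ x)%G (J :&: K :^ x^-1)%G
             (tres T K (K :&: J :^ x)%G a))) /\
  (forall (H J K : {group gT}) a, J \subset H -> K \subset H ->
     tres T H J (tnm T H K a) =
     \prod_(x in H | is_dcrep J K x)
        tnm T J (J :&: K :^ x^-1)%G
          (tcj T x^-1 (K :&: J :^ x)%G (J :&: K :^ x^-1)%G
             (tres T K (K :&: J :^ x)%G a))) /\
  (forall (H K : {group gT}) (n : nat) (J : 'I_n -> {group gT})
          (a : forall i, tT T (J i)),
     K \subset H -> (forall i, J i \subset K) ->
     tnm T H K (\sum_(i < n) ttr T K (J i) (a i)) = recip_rhs T H K J a).

Record tambara (gT : finGroupType) := Tambara {
  tdata :> tambara_data gT;
  tdata_ax : is_tambara tdata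
}.

Definition tpred {gT : finGroupType} (T : tambara_data gT) :=
  forall H : {group gT}, tT T H -> Prop.

Definition tsub {gT : finGroupType} {T : tambara_data gT} (I J : tpred T) :=
  forall H x, I H x -> J H x.

Definition is_tideal {gT : finGroupType} {T : tambara_data gT} (I : tpred T)
  : Prop :=
  (forall H, I H 0) /\
  (forall H x y, I H x -> I H y -> I H (x + y)) /\
  (forall H x y, I H y -> I H (x * y)) /\
  (forall (H K : {group gT}) x, K \subset H -> I H x -> I K (tres T H K x)) /\
  (forall (H K : {group gT}) x, K \subset H -> I K x -> I H (ttr T H K x)) /\
  (forall (H K : {group gT}) x, K \subset H -> I K x -> I H (tnm T H K x)) /\
  (forall g (H K : {group gT}) x, (K :=: H :^ g)%g -> I H x -> I K (tcj T g H K x)).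

Definition tgen {gT : finGroupType} {T : tambara_data gT} (S : tpred T)
  : tpred T :=
  fun H x => forall I : tpred T, is_tideal I -> tsub S I -> I H x.

Definition tprinc {gT : finGroupType} {T : tambara_data gT} {H0 : {group gT}}
    (x0 : tT T H0) : tpred T :=
  tgen (fun H y => existT (fun K => tT T K) H y = existT _ H0 x0).

Definition lprod {gT : finGroupType} {T : tambara_data gT} (I J : tpred T)
  : tpred T :=
  fun H z => exists n (a b : 'I_n -> tT T H),
    (forall k, I H (a k)) /\ (forall k, J H (b k)) /\
    z = \sum_(k < n) a k * b k.

Definition tprod {gT : finGroupType} {T : tambara_data gT} (I J : tpred T)
  : tpred T := tgen (lprod I J).

(* I^n for n >= 1 (I^1 = I, I^(m+1) = I^m I) *)
Fixpoint tpow {gT : finGroupType} {T : tambara_data gT} (I : tpred T) (n : nat)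
  : tpred T :=
  match n with
  | 0 => I
  | 1 => I
  | m.+1 => tprod (tpow I m) I
  end.

Definition tsqrt {gT : finGroupType} {T : tambara_data gT} (I : tpred T)
  : tpred T :=
  fun H x => exists n : nat, (1 <= n)%N /\ tsub (tpow (tprinc x) n) I.

Definition is_radical {gT : finGroupType} {T : tambara_data gT} (I : tpred T)
  : Prop :=
  is_tideal I /\ (forall H x, I H x <-> tsqrt I H x).

Definition is_tprime {gT : finGroupType} {T : tambara_data gT} (P : tpred T)
  : Prop :=
  is_tideal P /\ ~ P [set: gT]%G 1 /\
  (forall I J : tpred T, is_tideal I -> is_tideal J ->
     tsub (tprod I J) P -> tsub I P \/ tsub J P).

Definition RadId {gT : finGroupType} (T : tambara_data gT) :=
  {I : tpred T | is_radical I}.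

Definition SpecNak {gT : finGroupType} (T : tambara_data gT) :=
  {P : tpred T | is_tprime P}.

Definition V_closed {gT : finGroupType} {T : tambara_data gT} {H : {group gT}}
    (x : tT T H) : SpecNak T -> Prop :=
  fun P => sval P H x.

(* open sets of the topology on Spec_Nak(T) having the V_H(x) as a subbasis of
   closed sets: unions of finite intersections of complements of V_H(x) *)
Definition is_open_spec {gT : finGroupType} {T : tambara_data gT}
    (U : SpecNak T -> Prop) : Prop :=
  forall P, U P -> exists (n : nat) (Hs : 'I_n -> {group gT})
                          (xs : forall k, tT T (Hs k)),
    (forall k, ~ V_closed (xs k) P) /\
    (forall Q, (forall k, ~ V_closed (xs k) Q) -> U Q).

Definition OpenSpec {gT : finGroupType} (T : tambara_data gT) :=
  {U : SpecNak T -> Prop | is_open_spec U}.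

(* isomorphism of frames RadId_G(T) -> Omega(Spec_Nak(T)): a bijection
   preserving binary meets (intersections on both sides), the top element and
   arbitrary joins (sqrt of the sum on the left, unions on the right). *)
Definition frame_iso {gT : finGroupType} {T : tambara_data gT}
    (phi : RadId T -> OpenSpec T) : Prop :=
  bijective phi /\
  (forall I J R : RadId T,
     (forall H x, sval R H x <-> sval I H x /\ sval J H x) ->
     forall P, sval (phi R) P <-> sval (phi I) P /\ sval (phi J) P) /\
  (forall R : RadId T, (forall H x, sval R H x) -> forall P, sval (phi R) P) /\
  (forall (S : RadId T -> Prop) (R : RadId T),
     (forall H x, sval R H x <->
        tsqrt (tgen (fun K y => exists I : RadId T, S I /\ sval I K y)) H x) ->
     forall P, sval (phi R) P <-> exists I : RadId T, S I /\ sval (phi I) P).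

(* Main.v *)
From HB Require Import structures.
Require Import Defs.
From mathcomp Require Import all_boot all_algebra all_fingroup.
From mathcomp Require Import all_order.
From mathcomp Require boolp classical_sets.
From Stdlib Require Import Classical.
Set Implicit Arguments. Unset Strict Implicit. Unset Printing Implicit Defensive.
Import GRing.Theory.

Section GroupPart.
Local Open Scope group_scope.

Lemma dcrep_exists (gT : finGroupType) (H L K : {group gT}) :
  L \subset H -> K \subset H -> exists2 x, x \in H & is_dcrep L K x.
Proof.
move=> sLH sKH.
have E y : y \in L :* 1 * K -> L :* y * K = L :* 1 * K.
  rewrite rcoset1 => /mulsgP[l k Ll Kk ->].
  rewrite rcosetM rcoset_id //.
  by rewrite -mulgA lcoset_id.
have [y Hy Hp] : exists2 y, y \in L :* 1 * K & [pick z in L :* 1 * K] = Some y.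
  case: pickP => [y Hy|none]; first by exists y.
  by have := none 1; rewrite /= rcoset1 -{1}(mulg1 1) mem_mulg.
exists y.
  move: Hy; rewrite rcoset1 => /mulsgP[l k Ll Kk ->].
  by apply: groupM; [exact: (subsetP sLH) | exact: (subsetP sKH)].
by rewrite /is_dcrep (E y Hy) Hp.
Qed.

Lemma sect_actM (gT : finGroupType) n (g h : gT) (s : tsection gT n) :
  sect_act (g * h) s = sect_act g (sect_act h s).
Proof.
apply/ffunP=> C; rewrite !ffunE invMg lcosetM.
by case: (s _) => [[i D]|] //=; rewrite lcosetM.
Qed.

Lemma sect_act1 (gT : finGroupType) n (s : tsection gT n) : sect_act 1 s = s.
Proof.
apply/ffunP=> C; rewrite !ffunE invg1 lcoset1.
by case: (s _) => [[i D]|] //=; rewrite lcoset1.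
Qed.

Lemma sect_stab_fix (gT : finGroupType) (H : {group gT}) n (s : tsection gT n) h :
  h \in sect_stab H s -> sect_act h s = s.
Proof.
have gS : group_set [set h in H | sect_act h s == s].
  apply/group_setP; split; first by rewrite inE group1 sect_act1 eqxx.
  move=> a b; rewrite !inE => /andP[Ha /eqP Ea] /andP[Hb /eqP Eb].
  by rewrite groupM // sect_actM Eb Ea eqxx.
rewrite /sect_stab /= (gen_set_id gS) inE => /andP[_ /eqP //].
Qed.

Lemma sect_stab_sub (gT : finGroupType) (H : {group gT}) n (s : tsection gT n) :
  sect_stab H s \subset H.
Proof. by rewrite /sect_stab /= gen_subG; apply/subsetP=> h; rewrite inE => /andP[]. Qed.

Lemma sect_some (gT : finGroupType) (H K : {group gT}) n (J : 'I_n -> {group gT})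
   (s : tsection gT n) x :
  is_tsection H K J s -> x \in H ->
  exists i D, s (x *: K) = Some (i, D) /\ D \in lcosets (J i) H /\ D \subset x *: K.
Proof.
move=> /forallP /(_ (x *: K)); rewrite mem_lcosets => + Hx.
have -> : x \in H * K by rewrite -{1}(mulg1 x) mem_mulg.
case: (s _) => [[i D]|] // /andP[D1 D2].
by exists i, D.
Qed.

Lemma sect_stab_incl (gT : finGroupType) (H K : {group gT}) n (J : 'I_n -> {group gT})
   (s : tsection gT n) x i D :
  is_tsection H K J s -> x \in H -> s (x *: K) = Some (i, D) ->
  sect_stab H s :&: K :^ x^-1 \subset J i :^ (repr D)^-1.
Proof.
move=> sec Hx sxK.
have [i' [D' [E [DJ _]]]] := sect_some sec Hx.
rewrite sxK in E; case: E DJ => <- <- DJ.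
have [z Hz DE] := lcosetsP DJ.
set y := repr D.
have yD : y \in D by rewrite /y (@mem_repr _ _ z) // DE lcoset_refl.
have Dy : D = y *: J i by rewrite DE; apply/esym/lcoset_eqP; rewrite -DE.
apply/subsetP=> h /setIP[hS hK].
have := sect_stab_fix hS => /ffunP /(_ (x *: K)).
rewrite ffunE -lcosetM.
have -> : (h^-1 * x) *: K = x *: K.
  apply/lcoset_eqP; rewrite mem_lcoset mulgA.
  by move: hK; rewrite mem_conjgV => hK; rewrite -mulgA -conjgE conjVg groupV.
rewrite sxK /= => -[hD].
rewrite mem_conjgV.
have : h * y \in D by rewrite -hD mem_lcoset mulgA mulVg mul1g.
by rewrite Dy mem_lcoset conjgE mulgA.
Qed.

End GroupPart.

Local Open Scope ring_scope.

Section Ax.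
Variable gT : finGroupType.
Variable T : tambara gT.
Implicit Types H K L M J : {group gT}.

Ltac tx := case: (tdata_ax _ T) =>
  [a1 [a2 [a3 [a4 [a5 [a6 [a7 [a8 [a9 [a10 [a11 [a12 [a13 [a14 [a15 [a16 a17]]]]]]]]]]]]]]]].

Lemma res1 H K : (K \subset H)%g -> tres T H K 1 = 1.
Proof. by tx => sKH; case: (a1 H K sKH). Qed.
Lemma resD H K x y : (K \subset H)%g -> tres T H K (x + y) = tres T H K x + tres T H K y.
Proof. by tx => sKH; case: (a1 H K sKH) => _ []. Qed.
Lemma resM H K x y : (K \subset H)%g -> tres T H K (x * y) = tres T H K x * tres T H K y.
Proof. by tx => sKH; case: (a1 H K sKH) => _ []. Qed.
Lemma resid H x : tres T H H x = x.
Proof. by tx; apply: a2. Qed.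
Lemma resres H K L x : (L \subset K)%g -> (K \subset H)%g ->
  tres T K L (tres T H K x) = tres T H L x.
Proof. by tx; apply: a3. Qed.
Lemma trD H K x y : (K \subset H)%g -> ttr T H K (x + y) = ttr T H K x + ttr T H K y.
Proof. by tx => ?; apply: a4. Qed.
Lemma trid H x : ttr T H H x = x.
Proof. by tx; apply: a5. Qed.
Lemma trtr H K L x : (L \subset K)%g -> (K \subset H)%g ->
  ttr T H K (ttr T K L x) = ttr T H L x.
Proof. by tx; apply: a6. Qed.
Lemma nm1 H K : (K \subset H)%g -> tnm T H K 1 = 1.
Proof. by tx => sKH; case: (a7 H K sKH). Qed.
Lemma nmM H K x y : (K \subset H)%g -> tnm T H K (x * y) = tnm T H K x * tnm T H K y.
Proof. by tx => sKH; case: (a7 H K sKH). Qed.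
Lemma nmid H x : tnm T H H x = x.
Proof. by tx; apply: a8. Qed.
Lemma nmnm H K L x : (L \subset K)%g -> (K \subset H)%g ->
  tnm T H K (tnm T K L x) = tnm T H L x.
Proof. by tx; apply: a9. Qed.
Lemma cj1 g H K : (K :=: H :^ g)%g -> tcj T g H K 1 = 1.
Proof. by tx => E; case: (a10 g H K E). Qed.
Lemma cjD g H K x y : (K :=: H :^ g)%g -> tcj T g H K (x + y) = tcj T g H K x + tcj T g H K y.
Proof. by tx => E; case: (a10 g H K E) => _ []. Qed.
Lemma cjM g H K x y : (K :=: H :^ g)%g -> tcj T g H K (x * y) = tcj T g H K x * tcj T g H K y.
Proof. by tx => E; case: (a10 g H K E) => _ []. Qed.
Lemma cjcj g h H K L x : (K :=: H :^ g)%g -> (L :=: K :^ h)%g ->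
  tcj T h K L (tcj T g H K x) = tcj T (g * h)%g H L x.
Proof. by tx; apply: a11. Qed.
Lemma cjin h H x : h \in H -> tcj T h H H x = x.
Proof. by tx; apply: a12. Qed.
Lemma cjres g H K H' K' x : (K \subset H)%g -> (H' :=: H :^ g)%g -> (K' :=: K :^ g)%g ->
  tcj T g K K' (tres T H K x) = tres T H' K' (tcj T g H H' x).
Proof. by tx => s e1 e2; case: (a13 g H K H' K' s e1 e2). Qed.
Lemma cjtr g H K H' K' x : (K \subset H)%g -> (H' :=: H :^ g)%g -> (K' :=: K :^ g)%g ->
  tcj T g H H' (ttr T H K x) = ttr T H' K' (tcj T g K K' x).
Proof. by tx => s e1 e2; case: (a13 g H K H' K' s e1 e2) => _ []. Qed.
Lemma cjnm g H K H' K' x : (K \subset H)%g -> (H' :=: H :^ g)%g -> (K' :=: K :^ g)%g ->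
  tcj T g H H' (tnm T H K x) = tnm T H' K' (tcj T g K K' x).
Proof. by tx => s e1 e2; case: (a13 g H K H' K' s e1 e2) => _ []. Qed.
Lemma frob H K a b : (K \subset H)%g -> ttr T H K (a * tres T H K b) = ttr T H K a * b.
Proof. by tx; apply: a14. Qed.
Lemma mackey_tr H J K a : (J \subset H)%g -> (K \subset H)%g ->
     tres T H J (ttr T H K a) =
     \sum_(x in H | is_dcrep J K x)
        ttr T J (J :&: K :^ x^-1)%G
          (tcj T x^-1 (K :&: J :^ x)%G (J :&: K :^ x^-1)%G
             (tres T K (K :&: J :^ x)%G a)).
Proof. by tx; apply: a15. Qed.
Lemma mackey_nm H J K a : (J \subset H)%g -> (K \subset H)%g ->
     tres T H J (tnm T H K a) =
     \prod_(x in H | is_dcrep J K x)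
        tnm T J (J :&: K :^ x^-1)%G
          (tcj T x^-1 (K :&: J :^ x)%G (J :&: K :^ x^-1)%G
             (tres T K (K :&: J :^ x)%G a)).
Proof. by tx; apply: a16. Qed.
Lemma recip H K (n : nat) (J : 'I_n -> {group gT}) (a : forall i, tT T (J i)) :
     (K \subset H)%g -> (forall i, J i \subset K)%g ->
     tnm T H K (\sum_(i < n) ttr T K (J i) (a i)) = recip_rhs T H K J a.
Proof. by tx; apply: a17. Qed.

Lemma res0 H K : (K \subset H)%g -> tres T H K 0 = 0.
Proof. by move=> s; apply/(@addrI _ (tres T H K 0)); rewrite -resD // !addr0. Qed.
Lemma tr0 H K : (K \subset H)%g -> ttr T H K 0 = 0.
Proof. by move=> s; apply/(@addrI _ (ttr T H K 0)); rewrite -trD // !addr0. Qed.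
Lemma cj0 g H K : (K :=: H :^ g)%g -> tcj T g H K 0 = 0.
Proof. by move=> s; apply/(@addrI _ (tcj T g H K 0)); rewrite -cjD // !addr0. Qed.

End Ax.

Section Ideals.
Variable gT : finGroupType.
Variable T : tambara gT.
Implicit Types H K L M X : {group gT}.
Implicit Types I A B S J : tpred T.

Lemma id0 I H : is_tideal I -> I H 0.
Proof. by case. Qed.
Lemma idD I H x y : is_tideal I -> I H x -> I H y -> I H (x + y).
Proof. by case=> _ [h _]; apply: h. Qed.
Lemma idM I H x y : is_tideal I -> I H y -> I H (x * y).
Proof. by case=> _ [_ [h _]]; apply: h. Qed.
Lemma idMr I H x y : is_tideal I -> I H x -> I H (x * y).
Proof. by move=> iI hx; rewrite mulrC; apply: idM. Qed.
Lemma idres I H K x : is_tideal I -> (K \subset H)%g -> I H x -> I K (tres T H K x).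
Proof. by case=> _ [_ [_ [h _]]]; apply: h. Qed.
Lemma idtr I H K x : is_tideal I -> (K \subset H)%g -> I K x -> I H (ttr T H K x).
Proof. by case=> _ [_ [_ [_ [h _]]]]; apply: h. Qed.
Lemma idnm I H K x : is_tideal I -> (K \subset H)%g -> I K x -> I H (tnm T H K x).
Proof. by case=> _ [_ [_ [_ [_ [h _]]]]]; apply: h. Qed.
Lemma idcj I g H K x : is_tideal I -> (K :=: H :^ g)%g -> I H x -> I K (tcj T g H K x).
Proof. by case=> _ [_ [_ [_ [_ [_ h]]]]]; apply: h. Qed.

Lemma id_sum I H (R : Type) (r : seq R) (P : pred R) (F : R -> tT T H) :
  is_tideal I -> (forall i, P i -> I H (F i)) -> I H (\sum_(i <- r | P i) F i).
Proof.
move=> iI hF; apply: (big_ind (I H)); [exact: id0 | |].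
  by move=> ???; apply: idD.
exact: hF.
Qed.

Lemma tgen_ideal S : is_tideal (tgen S).
Proof.
split; first by move=> H J iJ _; apply: id0.
split; first by move=> H x y hx hy J iJ sJ; apply: idD (hx J iJ sJ) (hy J iJ sJ).
split; first by move=> H x y hy J iJ sJ; apply: idM (hy J iJ sJ).
split; first by move=> H K x s hx J iJ sJ; apply: idres (hx J iJ sJ).
split; first by move=> H K x s hx J iJ sJ; apply: idtr (hx J iJ sJ).
split; first by move=> H K x s hx J iJ sJ; apply: idnm (hx J iJ sJ).
by move=> g H K x e hx J iJ sJ; apply: idcj (hx J iJ sJ).
Qed.

Lemma tgen_sub S : tsub S (tgen S).
Proof. by move=> H x hx J iJ sJ; apply: sJ. Qed.

Lemma tgen_min S I : is_tideal I -> tsub S I -> tsub (tgen S) I.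
Proof. by move=> iI sI H x hx; apply: hx. Qed.

Lemma tgen_mono S S' : tsub S S' -> tsub (tgen S) (tgen S').
Proof.
move=> sS; apply: tgen_min; first exact: tgen_ideal.
by move=> H x /sS; apply: tgen_sub.
Qed.

Lemma tsub_trans I A B : tsub I A -> tsub A B -> tsub I B.
Proof. by move=> h1 h2 H x /h1 /h2. Qed.

Lemma lprod_subl I J : is_tideal I -> tsub (lprod I J) I.
Proof.
move=> iI H z [n [a [b [ha [hb ->]]]]].
by apply: id_sum => // k _; apply: idMr.
Qed.

Lemma lprod_subr I J : is_tideal J -> tsub (lprod I J) J.
Proof.
move=> iJ H z [n [a [b [ha [hb ->]]]]].
by apply: id_sum => // k _; apply: idM.
Qed.

Lemma tprod_ideal I J : is_tideal (tprod I J).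
Proof. exact: tgen_ideal. Qed.

Lemma tprod_subl I J : is_tideal I -> tsub (tprod I J) I.
Proof. by move=> iI; apply: tgen_min => //; apply: lprod_subl. Qed.

Lemma tprod_subr I J : is_tideal J -> tsub (tprod I J) J.
Proof. by move=> iJ; apply: tgen_min => //; apply: lprod_subr. Qed.

Lemma lprod_mono I J (I' J' : tpred T) : tsub I I' -> tsub J J' -> tsub (lprod I J) (lprod I' J').
Proof.
move=> s1 s2 H z [n [a [b [ha [hb ->]]]]].
by exists n, a, b; split; [move=> k; apply: s1|split; [move=> k; apply: s2|]].
Qed.

Lemma tprod_mono I J (I' J' : tpred T) : tsub I I' -> tsub J J' -> tsub (tprod I J) (tprod I' J').
Proof. by move=> s1 s2; apply: tgen_mono; apply: lprod_mono. Qed.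

Lemma lprod_mul I J H a b : I H a -> J H b -> lprod I J H (a * b).
Proof.
move=> ha hb; exists 1%N, (fun _ => a), (fun _ => b); split=> //; split=> //.
by rewrite big_ord1.
Qed.

Lemma recip_closed (Q W : tpred T) :
  (forall L, Q L 0) -> (forall L u v, Q L u -> Q L v -> Q L (u + v)) ->
  (forall H L u, (L \subset H)%g -> W L u -> Q H (ttr T H L u)) ->
  (forall L u r, W L u -> W L (u * r)) ->
  (forall L M X (J : {group gT}) y u, (M \subset L)%g -> (M \subset X)%g -> (X :=: J :^ y)%g ->
      W J u -> W L (tnm T L M (tres T X M (tcj T y J X u)))) ->
  forall H K n (J : 'I_n -> {group gT}) (a : forall i, tT T (J i)),
    (K \subset H)%g -> (forall i, J i \subset K)%g -> (forall i, W (J i) (a i)) ->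
    Q H (tnm T H K (\sum_(i < n) ttr T K (J i) (a i))).
Proof.
move=> Q0 QD Qtr WM Wf H K n J a sKH sJK Wa.
rewrite recip // /recip_rhs.
apply: (big_ind (Q H)); [exact: Q0|exact: QD|move=> s /andP[sec _]].
apply: Qtr; first exact: sect_stab_sub.
have [x0 Hx0 dx0] := dcrep_exists (sect_stab_sub H s) sKH.
rewrite (bigD1 x0) /=; last by rewrite Hx0.
apply: WM.
have [i [D [sxK _]]] := sect_some sec Hx0.
rewrite /recip_term sxK.
apply: Wf => //; first exact: subsetIl.
exact: sect_stab_incl sec Hx0 sxK.
Qed.

Definition lsum A B : tpred T :=
  fun H z => exists a b, A H a /\ B H b /\ z = a + b.
Arguments lsum : clear implicits.

Lemma lsum_ideal A B : is_tideal A -> is_tideal B -> is_tideal (lsum A B).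
Proof.
move=> iA iB.
have Q0 L : lsum A B L 0 by exists 0, 0; rewrite addr0; split; [exact: id0|split; [exact: id0|]].
have QD L u v : lsum A B L u -> lsum A B L v -> lsum A B L (u + v).
  move=> [a [b [ha [hb ->]]]] [a' [b' [ha' [hb' ->]]]].
  exists (a + a'), (b + b'); split; first exact: idD.
  by split; [exact: idD|rewrite addrACA].
split; first exact: Q0.
split; first exact: QD.
split.
  move=> H x y [a [b [ha [hb ->]]]]; exists (x * a), (x * b).
  by split; [exact: idM|split; [exact: idM|rewrite mulrDr]].
split.
  move=> H K x s [a [b [ha [hb ->]]]]; exists (tres T H K a), (tres T H K b).
  by split; [exact: idres|split; [exact: idres|rewrite resD]].
split.
  move=> H K x s [a [b [ha [hb ->]]]]; exists (ttr T H K a), (ttr T H K b).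
  by split; [exact: idtr|split; [exact: idtr|rewrite trD]].
split; last first.
  move=> g H K x e [a [b [ha [hb ->]]]]; exists (tcj T g H K a), (tcj T g H K b).
  by split; [exact: idcj|split; [exact: idcj|rewrite cjD]].
move=> H K x s [a [b [ha [hb ->]]]].
pose J := fun _ : 'I_2 => K.
pose c := fun i : 'I_2 => if i == ord0 then a else b.
have -> : a + b = \sum_(i < 2) ttr T K (J i) (c i).
  by rewrite big_ord_recr big_ord1 /= !trid.
apply: (@recip_closed (lsum A B) (fun L u => A L u \/ B L u)) => //.
- move=> H' L u sLH [hu|hu].
    exists (ttr T H' L u), 0; rewrite addr0; split; first exact: idtr.
    by split=> //; exact: id0.
  exists 0, (ttr T H' L u); rewrite add0r; split; first exact: id0.
  by split=> //; exact: idtr.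
- by move=> L u r [hu|hu]; [left|right]; apply: idMr.
- move=> L M X J' y u sML sMX eX [hu|hu]; [left|right].
    by apply: idnm => //; apply: idres => //; apply: idcj.
  by apply: idnm => //; apply: idres => //; apply: idcj.
- by move=> i; rewrite /c; case: (i == ord0); [left|right].
Qed.

End Ideals.
Arguments id0 {gT T I H}.
Arguments idD {gT T I H x y}.
Arguments idM {gT T I H x y}.
Arguments idMr {gT T I H x y}.
Arguments idres {gT T I H K x}.
Arguments idtr {gT T I H K x}.
Arguments idnm {gT T I H K x}.
Arguments idcj {gT T I g H K x}.
Arguments id_sum {gT T I H R r P F}.
Arguments tgen_sub {gT T S}.
Arguments tgen_min {gT T S I}.
Arguments tgen_mono {gT T S S'}.
Arguments tsub_trans {gT T I A B}.
Arguments lprod_subl {gT T I J}.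
Arguments lprod_subr {gT T I J}.
Arguments tprod_subl {gT T I J}.
Arguments tprod_subr {gT T I J}.
Arguments lprod_mono {gT T I J I' J'}.
Arguments tprod_mono {gT T I J I' J'}.
Arguments lprod_mul {gT T I J H a b}.



Section NF.
Variable gT : finGroupType.
Variable T : tambara gT.
Implicit Types H K L M X : {group gT}.
Variables (H0 : {group gT}) (a : tT T H0).

Definition Base M (z : tT T M) : Prop :=
  exists g, (M \subset H0 :^ g)%g /\ z = tres T (H0 :^ g)%G M (tcj T g H0 (H0 :^ g)%G a).

Definition Gen L (w : tT T L) : Prop :=
  exists M r z, (M \subset L)%g /\ Base z /\ w = r * tnm T L M z.

Lemma Base_res M M' (z : tT T M) : Base z -> (M' \subset M)%g -> Base (tres T M M' z).
Proof.
move=> [g [sM ->]] sM'; exists g; split; first exact: subset_trans sM.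
by rewrite resres.
Qed.

Lemma Base_cj M M' h (z : tT T M) : Base z -> (M' :=: M :^ h)%g -> Base (tcj T h M M' z).
Proof.
move=> [g [sM ->]] eM; exists (g * h)%g; split.
  by rewrite eM conjsgM conjSg.
rewrite (@cjres _ _ h (H0 :^ g)%G M (H0 :^ (g * h))%G M') //=; last by rewrite conjsgM.
by rewrite (@cjcj _ _ g h H0 (H0 :^ g)%G (H0 :^ (g * h))%G) //= conjsgM.
Qed.

Lemma Gen_mul L (w r : tT T L) : Gen w -> Gen (w * r).
Proof.
move=> [M [r' [z [sML [bz ->]]]]]; exists M, (r' * r), z; split=> //; split=> //.
by rewrite mulrAC.
Qed.

Lemma conj_inter (L' M : {group gT}) (x : gT) :
  ((L' :&: M :^ x^-1) :=: (M :&: L' :^ x) :^ x^-1)%g.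
Proof. by rewrite conjIg conjsgK setIC. Qed.

Lemma Gen_res L L' (w : tT T L) : Gen w -> (L' \subset L)%g -> Gen (tres T L L' w).
Proof.
move=> [M [r [z [sML [bz ->]]]]] sL'.
rewrite resM // mackey_nm //.
have [x0 Hx0 dx0] := dcrep_exists sL' sML.
rewrite (bigD1 x0) /=; last by rewrite Hx0.
set rest := \prod_(_ | _) _.
exists (L' :&: M :^ x0^-1)%G, (tres T L L' r * rest),
  (tcj T x0^-1 (M :&: L' :^ x0)%G (L' :&: M :^ x0^-1)%G (tres T M (M :&: L' :^ x0)%G z)).
split; first exact: subsetIl.
split; last by rewrite -[RHS]mulrA [rest * _]mulrC.
apply: Base_cj; last exact: conj_inter.
by apply: Base_res => //; exact: subsetIl.
Qed.

Lemma Gen_cj L L' h (w : tT T L) : Gen w -> (L' :=: L :^ h)%g -> Gen (tcj T h L L' w).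
Proof.
move=> [M [r [z [sML [bz ->]]]]] eL.
rewrite cjM // (@cjnm _ _ h L M L' (M :^ h)%G) //.
exists (M :^ h)%G, (tcj T h L L' r), (tcj T h M (M :^ h)%G z); split.
  by rewrite eL /= conjSg.
by split=> //; apply: Base_cj.
Qed.

Lemma Gen_nm L K (w : tT T L) : Gen w -> (L \subset K)%g -> Gen (tnm T K L w).
Proof.
move=> [M [r [z [sML [bz ->]]]]] sLK.
rewrite nmM // nmnm //.
exists M, (tnm T K L r), z; split => //; exact: subset_trans sLK.
Qed.

Inductive NF : forall K, tT T K -> Prop :=
| NF0 K : NF (0 : tT T K)
| NFadd K (u v : tT T K) : NF u -> NF v -> NF (u + v)
| NFtr K L (w : tT T L) : (L \subset K)%g -> Gen w -> NF (ttr T K L w).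

Lemma NF_sum K (R : Type) (r : seq R) (P : pred R) (F : R -> tT T K) :
  (forall i, P i -> NF (F i)) -> NF (\sum_(i <- r | P i) F i).
Proof.
move=> hF; apply: (big_ind (@NF K)); [exact: NF0 | |exact: hF].
by move=> ???; apply: NFadd.
Qed.

Lemma NF_tr L K (z : tT T L) : NF z -> (L \subset K)%g -> NF (ttr T K L z).
Proof.
elim=> {L z} [L|L u v _ hu _ hv|L L' w sL gw] sLK.
- by rewrite tr0 //; apply: NF0.
- by rewrite trD //; apply: NFadd; [apply: hu|apply: hv].
- by rewrite trtr //; apply: NFtr => //; exact: subset_trans sLK.
Qed.

Lemma NF_mul K (z r : tT T K) : NF z -> NF (r * z).
Proof.
move=> h; move: r; elim: h => {K z} [K|K u v _ hu _ hv|K L w sL gw] r.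
- by rewrite mulr0; apply: NF0.
- by rewrite mulrDr; apply: NFadd.
- by rewrite mulrC -frob //; apply: NFtr => //; apply: Gen_mul.
Qed.

Lemma NF_res K K' (z : tT T K) : NF z -> (K' \subset K)%g -> NF (tres T K K' z).
Proof.
elim=> {K z} [K|K u v _ hu _ hv|K L w sL gw] sK.
- by rewrite res0 //; apply: NF0.
- by rewrite resD //; apply: NFadd; [apply: hu|apply: hv].
rewrite mackey_tr //; apply: NF_sum => x _.
apply: NFtr; first exact: subsetIl.
apply: Gen_cj; last exact: conj_inter.
by apply: Gen_res => //; exact: subsetIl.
Qed.

Lemma NF_cj K K' h (z : tT T K) : NF z -> (K' :=: K :^ h)%g -> NF (tcj T h K K' z).
Proof.
elim=> {K z} [K|K u v _ hu _ hv|K L w sL gw] eK.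
- by rewrite cj0 //; apply: NF0.
- by rewrite cjD //; apply: NFadd; [apply: hu|apply: hv].
rewrite (@cjtr _ _ h K L K' (L :^ h)%G) //.
apply: NFtr; first by rewrite eK /= conjSg.
exact: Gen_cj.
Qed.

Lemma NF_repr K (z : tT T K) : NF z -> exists n (p : 'I_n -> {L : {group gT} & tT T L}),
  (forall i, (tag (p i) \subset K)%g /\ Gen (tagged (p i))) /\
  z = \sum_(i < n) ttr T K (tag (p i)) (tagged (p i)).
Proof.
elim=> {K z} [K|K u v _ [n1 [p1 [h1 ->]]] _ [n2 [p2 [h2 ->]]]|K L w sL gw].
- by exists 0%N, (fun _ => existT _ K (0 : tT T K) : {L : {group gT} & tT T L}); split;
    [case|rewrite big_ord0].
- exists (n1 + n2)%N, (fun i => match split i with inl j => p1 j | inr j => p2 j end).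
  split; first by move=> i; case: (split i).
  rewrite big_split_ord /=; congr (_ + _); apply: eq_bigr => i _.
    by rewrite (unsplitK (inl i : 'I_n1 + 'I_n2)).
  by rewrite (unsplitK (inr i : 'I_n1 + 'I_n2)).
- exists 1%N, (fun _ => existT _ L w : {L : {group gT} & tT T L}); split=> //.
  by rewrite big_ord1.
Qed.

Lemma NF_nm K L (z : tT T L) : NF z -> (L \subset K)%g -> NF (tnm T K L z).
Proof.
move=> /NF_repr [n [p [hp ->]]] sLK.
apply: (@recip_closed _ T (fun K z => NF z) (fun L w => Gen w)).
- by move=> ?; apply: NF0.
- by move=> ????; apply: NFadd.
- by move=> ????; apply: NFtr.
- by move=> ????; apply: Gen_mul.
- move=> L' M X J y u sML sMX eX gu.
  by apply: Gen_nm => //; apply: Gen_res => //; apply: Gen_cj.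
- exact: sLK.
- by move=> i; case: (hp i).
- by move=> i; case: (hp i).
Qed.

Lemma NF_ideal : is_tideal (fun K z => @NF K z).
Proof.
split; first by move=> ?; apply: NF0.
split; first by move=> H x y hx hy; exact: NFadd hx hy.
split; first by move=> H x y hy; exact: NF_mul hy.
split; first by move=> H K x s hx; exact: NF_res hx s.
split; first by move=> H K x s hx; exact: NF_tr hx s.
split; first by move=> H K x s hx; exact: NF_nm hx s.
by move=> g H K x e hx; exact: NF_cj hx e.
Qed.

Lemma NF_a : NF a.
Proof.
have -> : a = ttr T H0 H0 (1 * tnm T H0 H0 (tres T (H0 :^ 1)%G H0 (tcj T 1 H0 (H0 :^ 1)%G a))).
  have e : (H0 :^ 1)%G = H0 by apply: val_inj; rewrite /= conjsg1.
  by rewrite e resid cjin ?group1 // nmid mul1r trid.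
apply: NFtr => //; exists H0, 1, (tres T (H0 :^ 1)%G H0 (tcj T 1 H0 (H0 :^ 1)%G a)).
by split=> //; split=> //; exists 1%g; rewrite conjsg1.
Qed.

Lemma princ_NF : tsub (tprinc a) (fun K z => @NF K z).
Proof.
apply: tgen_min; first exact: NF_ideal.
move=> H y e.
have h : forall p, p = existT (fun K => tT T K) H0 a -> NF (tagged p).
  by move=> p ->; exact: NF_a.
exact: (h _ e).
Qed.

End NF.

Lemma sum_enum_val (R : nmodType) (I : finType) (F : I -> R) :
  \sum_(i : I) F i = \sum_(j < #|I|) F (enum_val (A := predT) j).
Proof. by rewrite -(big_enum_val (A := predT)); apply: eq_bigl. Qed.

Section FGen.
Variable gT : finGroupType.
Variable T : tambara gT.
Implicit Types H K L M X : {group gT}.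
Notation sig := {H : {group gT} & tT T H}.

Definition Fp Ha (a : tT T Ha) Hb (b : tT T Hb) : tpred T :=
  fun K z => exists M M' (al : tT T M) (be : tT T M'), (M \subset K)%g /\ (M' \subset K)%g /\
    Base a al /\ Base b be /\ z = tnm T K M al * tnm T K M' be.
Arguments Fp [Ha] a [Hb] b H z : rename.

Lemma prod_gen Ha (a : tT T Ha) Hb (b : tT T Hb) :
  tsub (tprod (tprinc a) (tprinc b)) (tgen (Fp a b)).
Proof.
have inner L (w : tT T L) (v : tT T L) : Gen a w -> NF b v -> tgen (Fp a b) L (w * v).
  move=> gw hv; move: w gw; elim: hv => {L v} [L|L u v _ hu _ hv|L L' w' sL gw'] w gw.
  - by rewrite mulr0; exact: id0 (tgen_ideal _).
  - by rewrite mulrDr; exact: idD (tgen_ideal _) (hu _ gw) (hv _ gw).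
  rewrite mulrC -frob //; apply: (idtr (tgen_ideal _)) => //.
  have [M [r [al [sM [bal ->]]]]] := Gen_res gw sL.
  case: gw' => [M' [r' [be [sM' [bbe ->]]]]].
  rewrite mulrACA (mulrC (tnm _ _ _ be)).
  apply: (idM (tgen_ideal _)).
  by apply: tgen_sub; exists M, M', al, be; split=> //; split=> //; split=> //; split=> //.
have outer K (u v : tT T K) : NF a u -> NF b v -> tgen (Fp a b) K (u * v).
  move=> hu; move: v; elim: hu => {K u} [K|K u u' _ hu _ hu'|K L w sL gw] v hv.
  - by rewrite mul0r; exact: id0 (tgen_ideal _).
  - by rewrite mulrDl; exact: idD (tgen_ideal _) (hu _ hv) (hu' _ hv).
  rewrite -frob //; apply: (idtr (tgen_ideal _)) => //.
  by apply: inner => //; apply: NF_res.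
apply: tgen_min; first exact: tgen_ideal.
move=> K z [n [u [v [hu [hv ->]]]]].
apply: (id_sum (tgen_ideal _)) => //.
by move=> k _; apply: outer; [apply: princ_NF|apply: princ_NF].
Qed.

Definition GenF (I : finType) (f : I -> sig) : tpred T :=
  fun H y => exists i, f i = existT _ H y.
Arguments GenF [I] f H y.

Lemma GenF_sub (I : finType) (f : I -> sig) (E : tpred T) :
  (forall i, E (tag (f i)) (tagged (f i))) -> tsub (GenF f) E.
Proof. by move=> hE H y [i e]; have := hE i; rewrite e. Qed.

Lemma GenF_mem (I : finType) (f : I -> sig) i : GenF f (tag (f i)) (tagged (f i)).
Proof. by exists i; case: (f i). Qed.

Definition FG (E : tpred T) : Prop :=
  exists (I : finType) (f : I -> sig), tsub E (tgen (GenF f)) /\ tsub (tgen (GenF f)) E.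

Definition Omega := ({group gT} * gT * gT * {group gT} * {group gT})%type.

Definition mk K (v : tT T K) : sig := existT _ K v.

Definition fF Ha (a : tT T Ha) Hb (b : tT T Hb) (q : Omega) : sig :=
  let: (K, g, g', M, M') := q in
  if [&& (M \subset K)%g, (M' \subset K)%g, (M \subset Ha :^ g)%g & (M' \subset Hb :^ g')%g]
  then mk (tnm T K M (tres T (Ha :^ g)%G M (tcj T g Ha (Ha :^ g)%G a)) *
                   tnm T K M' (tres T (Hb :^ g')%G M' (tcj T g' Hb (Hb :^ g')%G b)))
  else mk (0 : tT T K).

Lemma princ_self H (x : tT T H) : tprinc x H x.
Proof. exact: tgen_sub. Qed.

Lemma princ_min H (x : tT T H) (E : tpred T) : is_tideal E -> E H x -> tsub (tprinc x) E.
Proof.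
move=> iE hx; apply: tgen_min => //.
move=> K y e.
have h : forall p, p = existT (fun K => tT T K) H x -> E (tag p) (tagged p).
  by move=> p ->.
exact: (h _ e).
Qed.

Lemma FG_prod_princ Ha (a : tT T Ha) Hb (b : tT T Hb) :
  tsub (tprod (tprinc a) (tprinc b)) (tgen (GenF (fF a b))) /\
  tsub (tgen (GenF (fF a b))) (tprod (tprinc a) (tprinc b)).
Proof.
split.
  apply: (tsub_trans (@prod_gen _ a _ b)); apply: tgen_mono.
  move=> K z [M [M' [al [be [sM [sM' [[g [sg ->]] [[g' [sg' ->]] ->]]]]]]]].
  exists (K, g, g', M, M'); rewrite /fF.
  by rewrite sM sM' sg sg'.
apply: tgen_min; first exact: tprod_ideal.
apply: GenF_sub => -[[[[K g] g'] M] M'] /=.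
case: ifP => [/and4P[sM sM' sg sg']|_] /=; last by exact: id0 (tprod_ideal _ _).
apply: tgen_sub; apply: lprod_mul.
  apply: (idnm (tgen_ideal _)) => //.
  apply: (idres (tgen_ideal _)) => //.
  apply: (idcj (tgen_ideal _)) => //.
  exact: princ_self.
apply: (idnm (tgen_ideal _)) => //.
apply: (idres (tgen_ideal _)) => //.
apply: (idcj (tgen_ideal _)) => //.
exact: princ_self.
Qed.

Definition LSf (I : finType) (f : I -> sig) : tpred T :=
  fun H u => exists c : I -> tT T H, (forall i, tprinc (tagged (f i)) H (c i)) /\ u = \sum_i c i.
Arguments LSf [I] f H u.

Lemma LSf_ideal (I : finType) (f : I -> sig) : is_tideal (LSf f).
Proof.
have ip i : is_tideal (tprinc (tagged (f i))) by apply: tgen_ideal.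
have Q0 L : LSf f L 0.
  by exists (fun _ => 0); split; [move=> i; exact: id0 (ip i)|rewrite big1].
have QD L u v : LSf f L u -> LSf f L v -> LSf f L (u + v).
  move=> [c [hc ->]] [c' [hc' ->]]; exists (fun i => c i + c' i); split.
    by move=> i; exact: idD (ip i) (hc i) (hc' i).
  by rewrite big_split.
split; first exact: Q0.
split; first exact: QD.
split.
  move=> H x y [c [hc ->]]; exists (fun i => x * c i); split.
    by move=> i; exact: idM (ip i) (hc i).
  by rewrite mulr_sumr.
split.
  move=> H K x s [c [hc ->]]; exists (fun i => tres T H K (c i)); split.
    by move=> i; exact: idres (ip i) s (hc i).
  by rewrite (big_morph _ (fun u v => resD u v s) (res0 T s)).
split.
  move=> H K x s [c [hc ->]]; exists (fun i => ttr T H K (c i)); split.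
    by move=> i; exact: idtr (ip i) s (hc i).
  by rewrite (big_morph _ (fun u v => trD u v s) (tr0 T s)).
split; last first.
  move=> g H K x e [c [hc ->]]; exists (fun i => tcj T g H K (c i)); split.
    by move=> i; exact: idcj (ip i) e (hc i).
  by rewrite (big_morph _ (fun u v => cjD u v e) (cj0 T e)).
move=> H K x s [c [hc ->]].
have -> : \sum_i c i = \sum_(j < #|I|) ttr T K K (c (enum_val (A := predT) j)).
  by rewrite sum_enum_val; apply: eq_bigr => j _; rewrite trid.
apply: (@recip_closed _ T (LSf f) (fun L w => exists i, tprinc (tagged (f i)) L w)) => //.
- move=> H' L u sLH [i hu].
  exists (fun j => if j == i then ttr T H' L u else 0); split.
    by move=> j; case: eqP => [->|_]; [exact: idtr (ip i) sLH hu|exact: id0 (ip j)].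
  by rewrite -big_mkcond /= big_pred1_eq.
- by move=> L u r [i hu]; exists i; exact: idMr (ip i) hu.
- move=> L M X J y u sML sMX eX [i hu]; exists i.
  exact: idnm (ip i) sML (idres (ip i) sMX (idcj (ip i) eX hu)).
- by move=> j; exists (enum_val (A := predT) j); apply: hc.
Qed.

Lemma tgen_LSf (I : finType) (f : I -> sig) : tsub (tgen (GenF f)) (LSf f).
Proof.
apply: tgen_min; first exact: LSf_ideal.
apply: GenF_sub => i.
exists (fun j => if j == i then tagged (f i) else 0); split.
  move=> j; case: eqP => [->|_]; first exact: princ_self.
  by exact: id0 (tgen_ideal _).
by rewrite -big_mkcond /= big_pred1_eq.
Qed.

Lemma FG_tprod (E : tpred T) : is_tideal E -> FG E -> FG (tprod E E).
Proof.
move=> iE [I [f [s1 s2]]].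
pose f2 (q : I * I * Omega) : sig :=
  fF (tagged (f q.1.1)) (tagged (f q.1.2)) q.2.
have fE i : tsub (tprinc (tagged (f i))) E.
  apply: princ_min => //; apply: s2; apply: tgen_sub; exact: GenF_mem.
exists (Finite.clone (I * I * Omega)%type _), f2; split.
  apply: tgen_min; first exact: tgen_ideal.
  move=> K z [n [u [v [hu [hv ->]]]]].
  apply: (id_sum (tgen_ideal _)) => //.
  move=> k _.
  have [c [hc ->]] := tgen_LSf (s1 _ _ (hu k)).
  have [d [hd ->]] := tgen_LSf (s1 _ _ (hv k)).
  rewrite big_distrl /=; apply: (id_sum (tgen_ideal _)) => //.
  move=> i _; rewrite big_distrr /=; apply: (id_sum (tgen_ideal _)) => //.
  move=> j _.
  have := (FG_prod_princ (tagged (f i)) (tagged (f j))).1 K (c i * d j).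
  move=> /(_ (tgen_sub _ _ (lprod_mul (hc i) (hd j)))).
  apply: tgen_mono => H y [q e]; exists (i, j, q); exact: e.
apply: tgen_min; first exact: tprod_ideal.
apply: GenF_sub => -[[i j] q].
apply: (tprod_mono (fE i) (fE j)).
apply: (FG_prod_princ (tagged (f i)) (tagged (f j))).2.
apply: tgen_sub; exact: (GenF_mem (fF (tagged (f i)) (tagged (f j))) q).
Qed.

Lemma FG_compact (E : tpred T) (C : tpred T -> Prop) :
  is_tideal E -> FG E -> (forall J, C J -> is_tideal J) ->
  (forall J1 J2, C J1 -> C J2 -> tsub J1 J2 \/ tsub J2 J1) ->
  tsub E (fun H x => exists J, C J /\ J H x) -> exists J, C J /\ tsub E J.
Proof.
move=> iE [I [f [s1 s2]]] iC tot sEU.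
have fin : forall l : seq I, exists J, C J /\ forall i, i \in l -> J (tag (f i)) (tagged (f i)).
  elim=> [|i l [J [CJ hJ]]].
    have [J [CJ _]] := sEU 1%G 0 (@id0 _ _ _ 1%G iE).
    by exists J; split.
  have [J' [CJ' hJ']] := sEU _ _ (s2 _ _ (tgen_sub _ _ (GenF_mem f i))).
  case: (tot J J' CJ CJ') => sJ.
    exists J'; split=> // i'; rewrite inE => /orP[/eqP ->//|/hJ]; exact: sJ.
  exists J; split=> // i'; rewrite inE => /orP[/eqP ->|/hJ//]; exact: sJ.
have [J [CJ hJ]] := fin (enum I).
exists J; split=> //.
apply: (tsub_trans s1); apply: tgen_min; first exact: iC.
by apply: GenF_sub => i; apply: hJ; rewrite mem_enum.
Qed.

End FGen.

Section Spatial.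
Variable gT : finGroupType.
Variable T : tambara gT.
Implicit Types H K L M X : {group gT}.

Lemma chain_union_ideal (C : tpred T -> Prop) :
  (forall J, C J -> is_tideal J) ->
  (forall J1 J2, C J1 -> C J2 -> tsub J1 J2 \/ tsub J2 J1) ->
  (exists J, C J) -> is_tideal (fun H x => exists J, C J /\ J H x).
Proof.
move=> iC tot [J0 CJ0].
split; first by move=> H; exists J0; split=> //; exact: id0 (iC _ CJ0).
split.
  move=> H x y [J1 [C1 h1]] [J2 [C2 h2]].
  case: (tot J1 J2 C1 C2) => s.
    by exists J2; split=> //; exact: idD (iC _ C2) (s _ _ h1) h2.
  by exists J1; split=> //; exact: idD (iC _ C1) h1 (s _ _ h2).
split; first by move=> H x y [J [CJ h]]; exists J; split=> //; exact: idM (iC _ CJ) h.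
split; first by move=> H K x s [J [CJ h]]; exists J; split=> //; exact: idres (iC _ CJ) s h.
split; first by move=> H K x s [J [CJ h]]; exists J; split=> //; exact: idtr (iC _ CJ) s h.
split; first by move=> H K x s [J [CJ h]]; exists J; split=> //; exact: idnm (iC _ CJ) s h.
by move=> g H K x e [J [CJ h]]; exists J; split=> //; exact: idcj (iC _ CJ) e h.
Qed.

Lemma tprinc_ideal H (x : tT T H) : is_tideal (tprinc x).
Proof. exact: tgen_ideal. Qed.

Lemma tpow_ideal (J : tpred T) n : is_tideal J -> is_tideal (tpow J n).
Proof.
move=> iJ; elim: n => [|[|n] IH] //=.
exact: tgen_ideal.
Qed.

Lemma prime_rad (P : tpred T) H (y : tT T H) n :
  is_tprime P -> tsub (tpow (tprinc y) n) P -> P H y.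
Proof.
move=> [iP [_ pr]]; elim: n => [|[|n] IH] /=.
- by move=> s; apply: s; exact: princ_self.
- by move=> s; apply: s; exact: princ_self.
move=> s; case: (pr _ _ (tpow_ideal n.+1 (tprinc_ideal y)) (tprinc_ideal y) s) => s'.
  exact: IH.
by apply: s'; exact: princ_self.
Qed.

Variables (I0 : tpred T) (H0 : {group gT}) (x : tT T H0).
Arguments I0 : clear implicits.

Fixpoint Epow (k : nat) : tpred T :=
  match k with 0 => tprinc x | k'.+1 => tprod (Epow k') (Epow k') end.

Lemma Epow_ideal k : is_tideal (Epow k).
Proof. by case: k => [|k] /=; exact: tgen_ideal. Qed.

Lemma Epow_FG k : FG (Epow k).
Proof.
elim: k => [|k IH] /=; last by apply: FG_tprod => //; exact: Epow_ideal.
exists unit, (fun _ => mk x); split.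
  apply: princ_min; first exact: tgen_ideal.
  by apply: tgen_sub; exists tt.
apply: tgen_min; first exact: tgen_ideal.
by apply: GenF_sub => _; exact: princ_self.
Qed.

Lemma Epow_dec k m : (k <= m)%N -> tsub (Epow m) (Epow k).
Proof.
elim: m => [|m IH]; first by rewrite leqn0 => /eqP ->.
rewrite leq_eqVlt => /orP[/eqP ->|lt] //.
apply: tsub_trans (IH lt).
exact: tprod_subl (Epow_ideal m).
Qed.

Definition fam (J : tpred T) : Prop :=
  is_tideal J /\ tsub I0 J /\ forall k, ~ tsub (Epow k) J.

Hypothesis radI : is_radical I0.
Hypothesis xI : not (I0 H0 x).

Lemma fam_I : fam I0.
Proof.
have iI := radI.1.
split=> //; split=> //.
elim=> [|k IH] /=.
  by move=> s; apply: xI; apply: s; exact: princ_self.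
move=> s; apply: IH => K q hq.
apply/(radI.2 K q); exists 2%N; split=> //=.
apply: tsub_trans s; apply: tprod_mono;
  by apply: princ_min => //; exact: Epow_ideal.
Qed.

Definition famT := {J : tpred T | fam J}.
Definition famR (s t : famT) : bool := boolp.asbool (tsub (sval s) (sval t)).

Lemma exists_max : exists t : famT, classical_sets.premaximal famR t.
Proof.
apply: (@classical_sets.ZL_preorder famT (exist _ I0 fam_I) famR).
- by move=> t; apply/boolp.asboolP.
- move=> r s t /boolp.asboolP h1 /boolp.asboolP h2; apply/boolp.asboolP.
  exact: tsub_trans h2.
move=> A totA.
pose C (J : tpred T) := J = I0 \/ exists s, A s /\ J = sval s.
have iC J : C J -> is_tideal J.
  by case=> [->|[s [_ ->]]]; [exact: fam_I.1|exact: (svalP s).1].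
have totC J1 J2 : C J1 -> C J2 -> tsub J1 J2 \/ tsub J2 J1.
  case=> [->|[s1 [A1 ->]]] [->|[s2 [A2 ->]]].
  - by left.
  - by left; exact: (svalP s2).2.1.
  - by right; exact: (svalP s1).2.1.
  by case: (totA s1 s2 A1 A2) => /boolp.asboolP h; [left|right].
pose U := fun H y => exists J, C J /\ J H y.
have iU : is_tideal U by apply: chain_union_ideal => //; exists I0; left.
have fU : fam U.
  split=> //; split; first by move=> H y h; exists I0; split=> //; left.
  move=> k sk.
  have [J [CJ sJ]] := FG_compact (Epow_ideal k) (Epow_FG k) iC totC sk.
  case: CJ => [eJ|[s [_ eJ]]]; rewrite eJ in sJ.
    exact: fam_I.2.2 k sJ.
  exact: (svalP s).2.2 k sJ.
exists (exist _ U fU) => s As; apply/boolp.asboolP => H y h.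
by exists (sval s); split=> //; right; exists s.
Qed.

Lemma lsum_l (A B : tpred T) : is_tideal B -> tsub A (lsum A B).
Proof. by move=> iB H y h; exists y, 0; split=> //; split; [exact: id0 iB|rewrite addr0]. Qed.

Lemma lsum_r (A B : tpred T) : is_tideal A -> tsub B (lsum A B).
Proof. by move=> iA H y h; exists 0, y; split; [exact: id0 iA|split=> //; rewrite add0r]. Qed.

Lemma lsum_prod (P A B : tpred T) : is_tideal P -> is_tideal A -> is_tideal B ->
  tsub (tprod A B) P -> tsub (tprod (lsum P A) (lsum P B)) P.
Proof.
move=> iP iA iB sAB; apply: tgen_min => //.
move=> K z [n [u [v [hu [hv ->]]]]].
apply: (id_sum iP) => k _.
have [p [a [hp [ha ->]]]] := hu k.
have [p' [b [hp' [hb ->]]]] := hv k.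
rewrite mulrDl.
apply: (idD iP); first exact: idMr iP hp.
rewrite mulrDr; apply: (idD iP); first exact: idM iP hp'.
apply: sAB; apply: tgen_sub; exact: lprod_mul ha hb.
Qed.

Lemma spatial_prime : exists P, is_tprime P /\ tsub I0 P /\ ~ P H0 x.
Proof.
have [[P [iP [sIP nE]]] pm] := exists_max.
have maxP J : fam J -> tsub P J -> tsub J P.
  move=> fJ sPJ.
  have := pm (exist _ J fJ) (introT (boolp.asboolP _) sPJ).
  by move/boolp.asboolP.
exists P; split; last first.
  split=> // hx; apply: (nE 0%N) => /=.
  exact: princ_min.
split=> //; split.
  move=> h1; apply: (nE 0%N) => K y _.
  have : P K (tres T [set: gT]%G K 1) by apply: (idres iP) => //; exact: subsetT.
  rewrite res1 ?subsetT // => h; rewrite -(mulr1 y); exact: idM iP h.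
move=> A B iA iB sAB.
apply: NNPP => nAB.
have nA : ~ tsub A P by move=> h; apply: nAB; left.
have nB : ~ tsub B P by move=> h; apply: nAB; right.
have get (C : tpred T) : is_tideal C -> ~ tsub C P -> exists k, tsub (Epow k) (lsum P C).
  move=> iC nC; apply: NNPP => nk.
  apply: nC; apply: (tsub_trans (@lsum_r P C iP)).
  apply: maxP; last exact: (@lsum_l P C iC).
  split; first exact: lsum_ideal.
  split; first exact: (tsub_trans sIP (@lsum_l P C iC)).
  by move=> k hk; apply: nk; exists k.
have [k hk] := get A iA nA.
have [m hm] := get B iB nB.
apply: (nE (maxn k m).+1) => /=.
apply: tsub_trans (lsum_prod iP iA iB sAB).
apply: tprod_mono.
  exact: tsub_trans (Epow_dec (leq_maxl k m)) hk.
exact: tsub_trans (Epow_dec (leq_maxr k m)) hm.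
Qed.

End Spatial.

Section Frame.
Variable gT : finGroupType.
Variable T : tambara gT.
Implicit Types H K L M X : {group gT}.

Definition Dset (I : tpred T) : SpecNak T -> Prop := fun P => ~ tsub I (sval P).

Lemma Dset_open (I : tpred T) : is_open_spec (Dset I).
Proof.
move=> P hP.
have [H [y [hy nPy]]] : exists H (y : tT T H), I H y /\ ~ sval P H y.
  apply: NNPP => nn; apply: hP => H y hy; apply: NNPP => nPy.
  by apply: nn; exists H, y.
exists 1%N, (fun _ => H), (fun _ => y); split; first by move=> k.
move=> Q hQ sIQ; apply: (hQ ord0); exact: sIQ _ _ hy.
Qed.

Definition phi (I : RadId T) : OpenSpec T := exist _ (Dset (sval I)) (@Dset_open (sval I)).

Definition JU (U : OpenSpec T) : tpred T :=
  fun H y => forall P : SpecNak T, ~ sval U P -> sval P H y.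

Lemma prime_ideal (P : SpecNak T) : is_tideal (sval P).
Proof. exact: (svalP P).1. Qed.

Lemma JU_radical U : is_radical (JU U).
Proof.
have iJ : is_tideal (JU U).
  split; first by move=> H P _; exact: id0 (prime_ideal P).
  split; first by move=> H x y hx hy P nP; exact: idD (prime_ideal P) (hx P nP) (hy P nP).
  split; first by move=> H x y hy P nP; exact: idM (prime_ideal P) (hy P nP).
  split; first by move=> H K x s hx P nP; exact: idres (prime_ideal P) s (hx P nP).
  split; first by move=> H K x s hx P nP; exact: idtr (prime_ideal P) s (hx P nP).
  split; first by move=> H K x s hx P nP; exact: idnm (prime_ideal P) s (hx P nP).
  by move=> g H K x e hx P nP; exact: idcj (prime_ideal P) e (hx P nP).
split=> // H y; split.
  by move=> hy; exists 1%N; split=> //=; apply: princ_min.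
move=> [n [_ hn]] P nP.
apply: (prime_rad (n := n) (svalP P)).
exact: tsub_trans hn (fun K z h => h P nP).
Qed.

Definition psi (U : OpenSpec T) : RadId T := exist _ (JU U) (JU_radical U).

Fixpoint prodI n (xs : forall k : 'I_n, {H : {group gT} & tT T H}) (l : seq 'I_n) : tpred T :=
  match l with
  | [::] => fun _ _ => True
  | k :: l' => tprod (tprinc (tagged (xs k))) (prodI xs l')
  end.

Lemma prodI_ideal n xs (l : seq 'I_n) : is_tideal (prodI xs l).
Proof.
case: l => [|k l] /=; last exact: tgen_ideal.
by split=> //; split=> //; split=> //; split=> //; split=> //; split=> //.
Qed.

Lemma prodI_sub n xs (l : seq 'I_n) k : k \in l -> tsub (prodI xs l) (tprinc (tagged (xs k))).
Proof.
elim: l => [|k' l IH] //; rewrite inE => /orP[/eqP ->|kl] /=.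
  exact: tprod_subl (tgen_ideal _).
apply: tsub_trans (IH kl); exact: tprod_subr (prodI_ideal _ _).
Qed.

Lemma prodI_notin n xs (l : seq 'I_n) (P : SpecNak T) :
  (forall k, ~ sval P (tag (xs k)) (tagged (xs k))) -> ~ tsub (prodI xs l) (sval P).
Proof.
case: P => P [iP [n1 pr]] /= hk.
elim: l => [|k l IH] /=.
  by move=> s; apply: n1; apply: s.
move=> s; case: (pr _ _ (tgen_ideal _) (prodI_ideal _ _) s) => // s'.
by apply: (hk k); apply: s'; exact: princ_self.
Qed.

Lemma phi_psi U : phi (psi U) = U.
Proof.
case: U => U oU; apply: boolp.eq_exist => /=.
apply: boolp.funext => P; apply: boolp.propext; split.
  move=> hD; apply: NNPP => nU; apply: hD => H y h; exact: h P nU.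
move=> hU.
have [n [Hs [xs [nx hQ]]]] := oU P hU.
pose ys := fun k => mk (xs k).
have sJ : tsub (prodI ys (enum 'I_n)) (JU (exist _ U oU)).
  move=> H y hy Q nQ.
  have [k hk] : exists k, V_closed (xs k) Q.
    apply: NNPP => nn; apply: nQ; apply: hQ => k hk; apply: nn; exists k; exact: hk.
  apply: (princ_min (prime_ideal Q) hk).
  exact: prodI_sub (mem_enum _ k) _ _ hy.
move=> hJ; apply: (@prodI_notin n ys (enum 'I_n) P).
  by move=> k; exact: nx k.
exact: tsub_trans sJ hJ.
Qed.

Lemma psi_phi I : psi (phi I) = I.
Proof.
case: I => I rI; apply: boolp.eq_exist => /=.
apply: boolp.functional_extensionality_dep => H.
apply: boolp.funext => y; apply: boolp.propext; split.
  move=> hy; apply: NNPP => ny.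
  have [P [pP [sIP nP]]] := spatial_prime rI ny.
  apply: nP; apply: (hy (exist _ P pP)) => /=.
  by apply.
by move=> hy P nP; apply: NNPP => nPy; apply: nP => sIP; apply: nPy; apply: sIP.
Qed.

Lemma main_frame : exists phi : RadId T -> OpenSpec T, frame_iso phi.
Proof.
exists phi; split.
  by exists psi; [exact: psi_phi|exact: phi_psi].
split.
  move=> I J R hR P /=; split.
    move=> nR; split=> sP; apply: nR => H x /hR [hI hJ]; [exact: sP _ _ hI|exact: sP _ _ hJ].
  move=> [nI nJ] sR.
  case: P sR nI nJ => P [iP [n1 pr]] /= sR nI nJ.
  have iI := (svalP I).1; have iJ := (svalP J).1.
  have : tsub (tprod (sval I) (sval J)) P.
    move=> H x hx; apply: sR; apply/hR; split.
      exact: tprod_subl iI _ _ hx.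
    exact: tprod_subr iJ _ _ hx.
  by case/(pr _ _ iI iJ).
split.
  move=> R hR P /= sR.
  case: P sR => P [iP [n1 pr]] /= sR; exact: n1 (sR _ _ (hR _ _)).
move=> S R hR P /=; split.
  move=> nR; apply: NNPP => nn; apply: nR => H x /hR [n [_ hn]].
  apply: (prime_rad (n := n) (svalP P)).
  apply: tsub_trans hn _; apply: tgen_min; first exact: prime_ideal.
  move=> K y [I [SI hy]]; apply: NNPP => ny; apply: nn; exists I; split=> // sI.
  exact: ny (sI _ _ hy).
move=> [I [SI nI]] sR; apply: nI => H y hy; apply: sR; apply/hR.
exists 1%N; split=> //=; apply: princ_min; first exact: tgen_ideal.
by apply: tgen_sub; exists I.
Qed.

End Frame.

Unset Implicit Arguments.

Theorem corollary5p6 (gT : finGroupType) (T : tambara gT) :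
  exists phi : RadId T -> OpenSpec T, frame_iso phi.
Proof. exact: main_frame. Qed.
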